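(* Let $\mathcal{S}_m\subset\mathcal{S}_n\subset\mathcal{T}$ be nested subsets of the training set with $m<n$ elements respectively, and let $L_m,L_n$ be their empirical losses. Then for every $\mathbf{w}\in\mathbb{R}^p$, $$\mathbb{E}\left[|L_n(\mathbf{w})-L_m(\mathbf{w})|\right]\le\frac{n-m}{n}\left(V_{n-m}+V_m\right).$$
   Context: Let $Z$ be a random variable with distribution $P$ on a space $\mathcal{Z}$ and $f:\mathbb{R}^p\times\mathcal{Z}\to\mathbb{R}$ a loss function, with expected loss $L(\mathbf{w})=\mathbb{E}_Z[f(\mathbf{w},Z)]$. The training set $\mathcal{T}=\{z_1,\dots,z_N\}$ consists of $N$ independent samples from $P$. For a (fixed, data-independent) subset $\mathcal{S}\subseteq\mathcal{T}$ with $k$ elements, $L_{\mathcal{S}}(\mathbf{w})=\frac1k\sum_{z\in\mathcal{S}}f(\mathbf{w},z)$; for the sets $\mathcal{S}_k$ we write $L_k=L_{\mathcal{S}_k}$. Standing assumption: there are constants $V_k$ such that for every $k$ and every set $\mathcal{S}$ of $k$ independent samples from $P$, $\mathbb{E}[\sup_{\mathbf{w}\in\mathbb{R}^p}|L(\mathbf{w})-L_{\mathcal{S}}(\mathbf{w})|]\le V_k$ (expectation over the samples). *)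

(* Defs.v *)
From HB Require Import structures.
From mathcomp Require Import all_boot all_order all_algebra.
From mathcomp Require Import all_classical all_reals all_analysis.
Set Implicit Arguments. Unset Strict Implicit. Unset Printing Implicit Defensive.
Import Order.TTheory GRing.Theory Num.Theory.
Local Open Scope classical_set_scope.
Local Open Scope ring_scope.

Definition iid_samples (R : realType) (d : measure_display) (Omega : measurableType d)
  (Pr : probability Omega R) (d' : measure_display) (Zsp : measurableType d')
  (P : probability Zsp R) (k : nat) (X : 'I_k -> Omega -> Zsp) : Prop :=
  [/\ (forall i, measurable_fun setT (X i)),
      (forall i (A : set Zsp), measurable A -> Pr (X i @^-1` A) = P A) &
      (forall A : 'I_k -> set Zsp, (forall i, measurable (A i)) ->
         Pr (\bigcap_(i in [set: 'I_k]) (X i @^-1` A i)) =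
         (\prod_(i < k) Pr (X i @^-1` A i))%E)].

(* Expected loss L(w) = E_Z[f(w,Z)] (f w is assumed P-integrable). *)
Definition exp_loss (R : realType) (d' : measure_display) (Zsp : measurableType d')
  (P : probability Zsp R) (p : nat) (f : 'rV[R]_p -> Zsp -> R) (w : 'rV[R]_p) : R :=
  fine (\int[P]_z (f w z)%:E).

Definition emp_loss (R : realType) (d : measure_display) (Omega : measurableType d)
  (d' : measure_display) (Zsp : measurableType d') (p : nat)
  (f : 'rV[R]_p -> Zsp -> R) (k : nat) (X : 'I_k -> Omega -> Zsp)
  (S : {set 'I_k}) (w : 'rV[R]_p) (x : Omega) : R :=
  (#|S|%:R)^-1 * \sum_(i in S) f w (X i x).

(* Main.v *)
Require Import Defs.
From HB Require Import structures.
From mathcomp Require Import all_boot all_order all_algebra.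
From mathcomp Require Import all_classical all_reals all_analysis.
From mathcomp.algebra_tactics Require Import ring.
Import Order.TTheory GRing.Theory Num.Theory.
Local Open Scope classical_set_scope.
Local Open Scope ring_scope.

Lemma int_mono_ge0 d (T : measurableType d) (R : realType) (mu : measure T R)
  (f g : T -> \bar R) : (forall x, (0 <= f x)%E) -> (forall x, (f x <= g x)%E) ->
  (\int[mu]_x f x <= \int[mu]_x g x)%E.
Proof.
move=> f0 fg.
have g0 x : (0 <= g x)%E by apply: le_trans (f0 x) (fg x).
rewrite !ge0_integralTE //; apply: le_ereal_sup => _ [h /= hf <-].
exists h => //= x; exact: le_trans (hf x) (fg x).
Qed.

Lemma memp (R : realType) (d : measure_display) (Omega : measurableType d)
  (d' : measure_display) (Zsp : measurableType d') (p : nat)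
  (f : 'rV[R]_p -> Zsp -> R) (k : nat) (X : 'I_k -> Omega -> Zsp)
  (S : {set 'I_k}) (w : 'rV[R]_p) :
  measurable_fun setT (f w) -> (forall i, measurable_fun setT (X i)) ->
  measurable_fun setT (emp_loss f X S w).
Proof.
move=> mf mX; rewrite /emp_loss.
apply: measurable_realfun.measurable_funM; first exact: measurable_cst.
have -> : (fun x => \sum_(i in S) f w (X i x)) =
  (fun x => \sum_(i <- index_enum 'I_k) (if i \in S then f w (X i x) else 0)).
  by apply/funext => x; rewrite big_mkcond.
apply: measurable_sum => i; case: (i \in S); last exact: measurable_cst.
exact: measurableT_comp.
Qed.
Lemma sub_iid (R : realType) (d : measure_display) (Omega : measurableType d)
  (Pr : probability Omega R) (d' : measure_display) (Zsp : measurableType d')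
  (P : probability Zsp R) (N k : nat) (z : 'I_N -> Omega -> Zsp)
  (g : 'I_k -> 'I_N) : injective g -> iid_samples Pr P z ->
  iid_samples Pr P (fun i => z (g i)).
Proof.
move=> ginj [mz lz iz]; split; [by move=> i; exact: mz|by move=> i; exact: lz|move=> A mA].
pose B j := if [pick i | g i == j] is Some i then A i else setT.
have mB j : measurable (B j) by rewrite /B; case: pickP.
have Bg i : B (g i) = A i.
  rewrite /B; case: pickP => [i' /eqP /ginj -> //|/(_ i)]; by rewrite eqxx.
have -> : \bigcap_(i in [set: 'I_k]) ((fun i => z (g i)) i @^-1` A i) =
          \bigcap_(j in [set: 'I_N]) (z j @^-1` B j).
  apply/seteqP; split => x /= Hx.
  - move=> j _ /=; rewrite /B; case: pickP => [i /eqP <-|//].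
    exact: Hx.
  - move=> i _ /=; rewrite -Bg; exact: Hx.
rewrite iz // (bigID (fun j => j \in (g @: [set: 'I_k]%SET))) /=.
rewrite [X in (_ * X)%E]big1 ?mule1; last first.
  move=> j Hj; rewrite /B; case: pickP => [i /eqP Hi|_].
    by move: Hj; rewrite -Hi imset_f ?in_setT.
  by rewrite preimage_setT probability_setT.
rewrite (big_imset _ (h := g) (A := [set: 'I_k]%SET)) /=; last first.
  by move=> ? ? _ _; exact: ginj.
rewrite [RHS](eq_bigl (fun i => i \in [set: 'I_k]%SET)).
  by apply: eq_bigr => i _; rewrite Bg.
by move=> i /=; rewrite inE.
Qed.
Lemma emp_enum (R : realType) (d : measure_display) (Omega : measurableType d)
  (d' : measure_display) (Zsp : measurableType d') (p : nat)
  (f : 'rV[R]_p -> Zsp -> R) (N : nat) (z : 'I_N -> Omega -> Zsp)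
  (S : {set 'I_N}) w x :
  emp_loss f (fun i : 'I_#|S| => z (enum_val i)) [set: 'I_#|S|] w x = emp_loss f z S w x.
Proof.
rewrite /emp_loss cardsT card_ord; congr (_ * _).
rewrite (big_enum_val (fun i => f w (z i x))) /=.
by apply: eq_bigl => i; rewrite inE.
Qed.
Lemma alg (R: realType) (a b L : R) (m k : nat) : (0 < m)%N -> (0 < k)%N ->
  `|((m+k)%:R)^-1*(a+b) - m%:R^-1 * a| <=
    k%:R/(m+k)%:R * (`|L - k%:R^-1 * b| + `|L - m%:R^-1*a|).
Proof.
move=> m0 k0.
have mR : m%:R != 0 :> R by rewrite pnatr_eq0 -lt0n.
have kR : k%:R != 0 :> R by rewrite pnatr_eq0 -lt0n.
have mkR : (m+k)%:R != 0 :> R by rewrite pnatr_eq0 addn_eq0 negb_and -lt0n m0.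
have -> : ((m+k)%:R)^-1*(a+b) - m%:R^-1 * a =
   k%:R/(m+k)%:R * ((L - m%:R^-1*a) - (L - k%:R^-1 * b)).
  rewrite natrD in mkR *; field; rewrite mR kR mkR //.
rewrite normrM ger0_norm ?divr_ge0 ?ler0n // ler_wpM2l ?divr_ge0 ?ler0n //.
by rewrite [X in _ <= X]addrC; exact: ler_normB.
Qed.

Theorem lemma5 (R : realType) (d : measure_display) (Omega : measurableType d)
  (Pr : probability Omega R) (d' : measure_display) (Zsp : measurableType d')
  (P : probability Zsp R) (p : nat) (f : 'rV[R]_p -> Zsp -> R)
  (V : nat -> R) (N : nat) (z : 'I_N -> Omega -> Zsp)
  (Sm Sn : {set 'I_N}) (m n : nat) :
  (forall w, measurable_fun setT (f w)) ->
  (forall w, P.-integrable setT (fun u => (f w u)%:E)) ->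
  (forall k (X : 'I_k -> Omega -> Zsp), (0 < k)%N -> iid_samples Pr P X ->
     (\int[Pr]_x ereal_sup [set `|exp_loss P f w - emp_loss f X [set: 'I_k] w x|%:E
                           | w in [set: 'rV[R]_p]]
     <= (V k)%:E)%E) ->
  iid_samples Pr P z ->
  Sm \subset Sn -> #|Sm| = m -> #|Sn| = n -> (0 < m)%N -> (m < n)%N ->
  forall w : 'rV[R]_p,
    (\int[Pr]_x (`|emp_loss f z Sn w x - emp_loss f z Sm w x|)%:E
    <= (((n - m)%:R / n%:R) * (V (n - m)%N + V m))%:E)%E.
Proof.
move=> mf _ Hyp iidz sub cm cn m0 mn w.
set k := (n - m)%N.
have k0 : (0 < k)%N by rewrite subn_gt0.
have nmk : n = (m + k)%N by rewrite subnKC // ltnW.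
set D := Sn :\: Sm.
have cD : #|D| = k by rewrite cardsDS // cn cm.
have mz := iidz; case: mz => mz _ _.
set XD := fun i : 'I_#|D| => z (enum_val i).
set XM := fun i : 'I_#|Sm| => z (enum_val i).
have iD : iid_samples Pr P XD by apply: sub_iid iidz; exact: enum_val_inj.
have iM : iid_samples Pr P XM by apply: sub_iid iidz; exact: enum_val_inj.
have HD := Hyp _ XD (ltac:(by rewrite cD)) iD.
have HM := Hyp _ XM (ltac:(by rewrite cm)) iM.
set L := exp_loss P f w.
pose h1 x := `|L - emp_loss f XD [set: 'I_#|D|] w x|.
pose h2 x := `|L - emp_loss f XM [set: 'I_#|Sm|] w x|.
set c := (n - m)%:R / n%:R : R.
have c0 : 0 <= c by rewrite /c divr_ge0 ?ler0n.
have mh1 : measurable_fun setT h1.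
  apply: measurableT_comp => //; apply: measurable_realfun.measurable_funB;
    [exact: measurable_cst| apply: memp => // i; exact: mz].
have mh2 : measurable_fun setT h2.
  apply: measurableT_comp => //; apply: measurable_realfun.measurable_funB;
    [exact: measurable_cst| apply: memp => // i; exact: mz].
have pw x : `|emp_loss f z Sn w x - emp_loss f z Sm w x| <= c * (h1 x + h2 x).
  rewrite /h1 /h2 /XD /XM !emp_enum /emp_loss cD cm cn.
  have -> : \sum_(i in Sn) f w (z i x) =
      \sum_(i in Sm) f w (z i x) + \sum_(i in D) f w (z i x).
    rewrite (bigID (fun i => i \in Sm)) /=; congr (_ + _).
      by apply: eq_bigl => i; rewrite andb_idl // => /(fintype.subsetP sub).
    by apply: eq_bigl => i; rewrite /D inE andbC.
  rewrite /c /k nmk addKn; exact: alg.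
apply: (@le_trans _ _ (\int[Pr]_x (c%:E * ((h1 x)%:E + (h2 x)%:E)))%E).
  apply: ge0_le_integral => //.
  - apply/measurable_realfun.measurable_EFinP; apply: measurableT_comp => //.
    apply: measurable_realfun.measurable_funB; apply: memp => // i; exact: mz.
  - apply: measurable_funeM; apply: emeasurable_funD; exact/measurable_realfun.measurable_EFinP.
  - by move=> x _; rewrite -EFinD -EFinM lee_fin.
rewrite ge0_integralZl_EFin //; last 2 first.
  by move=> x _; rewrite -EFinD lee_fin addr_ge0 // /h1 /h2.
  by apply: emeasurable_funD; exact/measurable_realfun.measurable_EFinP.
rewrite ge0_integralD //; last 4 first.
  - by move=> x _; rewrite lee_fin /h1.
  - exact/measurable_realfun.measurable_EFinP.
  - by move=> x _; rewrite lee_fin /h2.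
  - exact/measurable_realfun.measurable_EFinP.
rewrite (EFinM c) EFinD; apply: lee_wpmul2l; first by rewrite lee_fin.
have -> : V k = V #|D| by rewrite cD.
rewrite -cm; apply: leeD.
- apply: le_trans HD; apply: int_mono_ge0 => [x|x]; first by rewrite lee_fin /h1.
  by apply: ereal_sup_ubound; exists w.
- apply: le_trans HM; apply: int_mono_ge0 => [x|x]; first by rewrite lee_fin /h2.
  by apply: ereal_sup_ubound; exists w.
Qed.
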